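(* Let $b\ge 3$, $D\subset\{0,\dots,b-1\}$ with $2\le|D|<b-1$, and list $\mathcal C=\mathcal C_{b,D}$ increasingly as $k_0<k_1<\cdots$. Given $\epsilon>0$ and $H\in\mathbb N$, for all sufficiently large $n_0$ there exist a set $G\subset \mathcal C\cap[0,b^{n_0})$ and a map $(k',h)\mapsto k''(k',h)\in\mathcal C\cap[0,b^{n_0})$, defined for $k'\in G$ and $0<h\le H$, such that: (1) $|G|\ge(1-\epsilon)|D|^{n_0}$; (2) for every $k'\in G$, $0<h\le H$ and $m\ge 1$, if $n$ is the index with $k_n=b^{n_0}k_m+k'$, then $k_{n+h}=b^{n_0}k_m+k''(k',h)$ and $s_b(k_{n+h})=s_b(k_m)+s_b(k''(k',h))$.
   Context: For an integer base $b\ge 3$ and a digit set $D$, the classical integer Cantor set is $\mathcal C_{b,D}=\{\sum_{j=0}^{k} d_j b^j : k\in\mathbb N_0,\ d_j\in D\}$. For a nonnegative integer $k=\sum_c k_c b^c$ with $k_c\in\{0,\dots,b-1\}$, $s_b(k)=\sum_c k_c$ is the base-$b$ sum of digits. *)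

(* Defs.v *)
From HB Require Import structures.
From mathcomp Require Import all_boot all_order all_algebra.
From mathcomp Require Import reals.
Set Implicit Arguments. Unset Strict Implicit. Unset Printing Implicit Defensive.

Definition digval (b : nat) (s : seq nat) : nat :=
  foldr (fun d acc => d + b * acc) 0 s.

Definition inC (b : nat) (D : {set 'I_b}) (x : nat) : Prop :=
  exists s : seq 'I_b, [/\ 0 < size s, all (fun d => d \in D) s &
                          x = digval b (map val s)].

(* Base-b digit sum s_b(k) = sum_c k_c, where k_c = (k / b^c) mod b.
   For b >= 2 all digits at positions c > k vanish, so summing over
   c <= k is the full digit sum. *)
Definition sumdig (b k : nat) : nat :=
  \sum_(c < k.+1) ((k %/ b ^ c) %% b).

(* Main.v *)
Require Import Defs.
From HB Require Import structures.
From mathcomp Require Import all_boot all_order all_algebra.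
From mathcomp Require Import reals.
From mathcomp Require Import zify ring lra.
Import Order.TTheory GRing.Theory Num.Theory.
Set Implicit Arguments. Unset Strict Implicit. Unset Printing Implicit Defensive.

Lemma digval_cat b l1 l2 : digval b (l1 ++ l2) = digval b l1 + b ^ size l1 * digval b l2.
Proof.
elim: l1 => [|d l IH] /=; first by rewrite expn0 mul1n.
by rewrite IH expnS mulnDr addnA mulnA.
Qed.

Lemma digval_lt b s : all (fun d => d < b) s -> digval b s < b ^ size s.
Proof.
elim: s => [|d s IH] /=; first by rewrite expn0.
move=> /andP[hd hs]; have := IH hs; rewrite expnS; set X := b ^ size s; nia.
Qed.

Lemma digval_digit b s : 1 < b -> all (fun d => d < b) s ->
  forall c, digval b s %/ b ^ c %% b = nth 0 s c.
Proof.
move=> hb; elim: s => [|d s IH] /=.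
  by move=> _ c; rewrite div0n mod0n nth_nil.
move=> /andP[hd hs] [|c] /=.
  by rewrite expn0 divn1 addnC mulnC modnMDl modn_small.
rewrite expnS divnMA addnC mulnC divnMDl ?(ltnW hb) // (divn_small hd) addn0.
exact: IH.
Qed.

Lemma digval_repr b n x : 0 < b -> x < b ^ n ->
  exists l : seq nat, [/\ size l = n, digval b l = x &
     forall c, c < n -> nth 0 l c = x %/ b ^ c %% b].
Proof.
move=> hb; elim: n x => [|n IH] x hx.
  exists [::]; split => //; move: hx; rewrite expn0; by case: x.
have hx' : x %/ b < b ^ n by rewrite ltn_divLR // -expnSr.
have [l [hs hv hn]] := IH _ hx'.
exists (x %% b :: l); split => /=; first by rewrite hs.
  by rewrite hv mulnC addnC -divn_eq.
move=> [|c] hc /=; first by rewrite expn0 divn1.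
by rewrite hn // expnS divnMA.
Qed.

Definition DV b (D : {set 'I_b}) : seq nat := [seq val d | d <- enum D].

Lemma lift_digits b (D : {set 'I_b}) (l : seq nat) : all (fun v => v \in DV D) l ->
  exists s : seq 'I_b, map val s = l /\ all (fun d => d \in D) s.
Proof.
elim: l => [|v l IH] /=; first by exists [::].
move=> /andP[/mapP[d hd ->] /IH [s [hs ha]]].
exists (d :: s) => /=; rewrite hs; split => //; rewrite ha andbT.
by rewrite -mem_enum.
Qed.

Definition digsum b L y := \sum_(c < L) (y %/ b ^ c %% b).

Lemma digsum_ext b L j y : 1 < b -> y < b ^ L -> digsum b (L + j) y = digsum b L y.
Proof.
move=> hb hy; elim: j => [|j IH]; first by rewrite addn0.
rewrite addnS /digsum big_ord_recr /= -/(digsum _ _ _) IH divn_small ?mod0n ?addn0 //.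
apply: (leq_trans hy); apply: leq_pexp2l; [exact: ltnW | exact: leq_addr].
Qed.

Lemma sumdig_digsum b L y : 1 < b -> y < b ^ L -> sumdig b y = digsum b L y.
Proof.
move=> hb hy.
have hy1 : y < b ^ y.+1 by apply: (ltn_trans (ltn_expl y hb)); rewrite ltn_exp2l.
rewrite /sumdig -/(digsum b y.+1 y) -(digsum_ext L hb hy1) addnC.
exact: digsum_ext.
Qed.

Lemma sumdig_rec b y : 1 < b -> sumdig b y = y %% b + sumdig b (y %/ b).
Proof.
move=> hb.
have hy1 : y < b ^ y.+1 by apply: (ltn_trans (ltn_expl y hb)); rewrite ltn_exp2l.
have hy2 : y < b ^ y.+2 by apply: (ltn_trans hy1); rewrite ltn_exp2l.
have hy3 : y %/ b < b ^ y.+1 by apply: leq_ltn_trans hy1; exact: leq_div.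
rewrite (sumdig_digsum hb hy2) (sumdig_digsum hb hy3) /digsum big_ord_recl expn0 divn1.
congr (_ + _); apply: eq_bigr => i _.
by rewrite lift0 expnS divnMA.
Qed.

Lemma sumdig0 b : sumdig b 0 = 0.
Proof. by rewrite /sumdig big_ord_recl big_ord0 div0n mod0n. Qed.

Lemma sumdig_block b n a x : 1 < b -> x < b ^ n ->
  sumdig b (b ^ n * a + x) = sumdig b a + sumdig b x.
Proof.
move=> hb; elim: n x => [|n IH] x hx.
  move: hx; rewrite expn0 mul1n ltnS leqn0 => /eqP ->.
  by rewrite addn0 sumdig0 addn0.
have hx' : x %/ b < b ^ n by rewrite ltn_divLR ?(ltnW hb) // -expnSr.
have ey : b ^ n.+1 * a + x = (b ^ n * a + x %/ b) * b + x %% b.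
  rewrite {1}(divn_eq x b) expnS; lia.
rewrite (sumdig_rec _ hb) ey modnMDl modn_mod divnMDl ?(ltnW hb) //.
rewrite (divn_small (ltn_pmod _ (ltnW hb))) addn0 IH // (sumdig_rec x hb).
lia.
Qed.

Definition Pb b (D : {set 'I_b}) n0 x :=
  (x < b ^ n0) && all (fun c => x %/ b ^ c %% b \in DV D) (iota 0 n0).

Lemma Pb_repr b (D : {set 'I_b}) n0 x : 0 < b -> Pb D n0 x ->
  exists s : seq 'I_b, [/\ size s = n0, all (fun d => d \in D) s & digval b (map val s) = x].
Proof.
move=> hb /andP[hx hall].
have [l [hs hv hn]] := digval_repr hb hx.
have hl : all (fun v => v \in DV D) l.
  apply/(all_nthP 0) => i; rewrite hs => hi; rewrite hn //.
  by move/allP: hall; apply; rewrite mem_iota.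
have [s [hsl hsa]] := lift_digits hl.
by exists s; split => //; [rewrite -(size_map val) hsl | rewrite hsl].
Qed.

Lemma Pb_inC b (D : {set 'I_b}) n0 x : 0 < b -> 0 < n0 -> Pb D n0 x -> inC D x.
Proof.
move=> hb hn /(Pb_repr hb) [s [hs ha hv]]; exists s; split => //; by rewrite hs.
Qed.

Lemma Pb_block b (D : {set 'I_b}) n0 x a : 0 < b -> Pb D n0 x -> inC D a ->
  inC D (b ^ n0 * a + x).
Proof.
move=> hb /(Pb_repr hb) [s [hs ha hv]] [sa [hsa haa ->]].
exists (s ++ sa); split.
- by rewrite size_cat addn_gt0 hsa orbT.
- by rewrite all_cat ha haa.
- by rewrite map_cat digval_cat size_map hs hv addnC.
Qed.

Lemma mod_digit b n0 z c : 0 < b -> c < n0 ->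
  (z %% b ^ n0) %/ b ^ c %% b = z %/ b ^ c %% b.
Proof.
move=> hb hc.
have e : b ^ n0 = (b ^ (n0 - c.+1) * b) * b ^ c.
  by rewrite -expnSr -expnD subnSK // subnK // ltnW.
have ez : z %/ b ^ c = (z %/ b ^ n0 * b ^ (n0 - c.+1)) * b + (z %% b ^ n0) %/ b ^ c.
  by rewrite {1}(divn_eq z (b ^ n0)) {2}e !mulnA divnMDl ?expn_gt0 ?hb.
by rewrite ez modnMDl.
Qed.

Lemma inC_block_inv b (D : {set 'I_b}) n0 z a : 1 < b -> inC D z -> 0 < a ->
  b ^ n0 * a <= z -> z < b ^ n0 * a + b ^ n0 ->
  Pb D n0 (z %% b ^ n0) /\ z = b ^ n0 * a + z %% b ^ n0.
Proof.
move=> hb [s [hs ha hz]] ha0 hlo hhi.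
have hb0 : 0 < b by apply: ltnW.
have hp : 0 < b ^ n0 by rewrite expn_gt0 hb0.
have hq : z %/ b ^ n0 = a.
  have h1 : z %/ b ^ n0 < a.+1 by rewrite ltn_divLR // mulSn; lia.
  have h2 : a <= z %/ b ^ n0 by rewrite leq_divRL //; lia.
  lia.
split; last by rewrite {1}(divn_eq z (b ^ n0)) hq mulnC.
apply/andP; split; first by rewrite ltn_pmod.
apply/allP => c; rewrite mem_iota add0n => hc.
rewrite mod_digit // hz digval_digit //; last first.
  by apply/allP => v /mapP [d _ ->]; exact: ltn_ord.
have hsz : n0 < size s.
  rewrite -(ltn_exp2l _ _ hb); apply: (leq_ltn_trans (leq_trans _ hlo)).
    by rewrite leq_pmulr.
  rewrite hz -(size_map val); apply: digval_lt.
  by apply/allP => v /mapP [d _ ->]; exact: ltn_ord.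
have : nth 0 (map val s) c \in map val s by apply: mem_nth; rewrite size_map (ltn_trans hc).
move=> /mapP [d hd ->]; apply: map_f; rewrite mem_enum.
by move/allP: ha; apply.
Qed.

Lemma count_Pb b (D : {set 'I_b}) n0 : 1 < b ->
  #|D| ^ n0 <= size [seq x <- iota 0 (b ^ n0) | Pb D n0 x].
Proof.
move=> hb.
pose DT := {x : 'I_b | x \in D}.
pose vv := fun d : DT => val (val d).
pose f := fun t : n0.-tuple DT => digval b (map vv t).
have hlt : forall t : n0.-tuple DT, all (fun d => d < b) (map vv t).
  by move=> t; apply/allP => v /mapP [d _ ->]; exact: ltn_ord.
have finj : injective f.
  move=> t1 t2 e; apply: val_inj; apply: (@inj_map _ _ vv).
    by move=> x y /val_inj /val_inj.
  apply: (eq_from_nth (x0 := 0)); first by rewrite !size_map !size_tuple.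
  move=> i _; rewrite -(digval_digit hb (hlt t1)) -(digval_digit hb (hlt t2)).
  by rewrite /f in e; rewrite e.
have -> : #|D| ^ n0 = size (map f (enum {: n0.-tuple DT})).
  by rewrite size_map -cardE card_tuple card_sig.
apply: uniq_leq_size; first by rewrite map_inj_uniq ?enum_uniq.
move=> x /mapP [t _ ->]; rewrite mem_filter mem_iota add0n /=.
have hb1 : f t < b ^ n0 by rewrite /f -{2}(size_tuple t) -(size_map vv); exact: digval_lt.
rewrite hb1 andbT /Pb hb1 /=; apply/allP => c; rewrite mem_iota add0n => hc.
rewrite /f digval_digit //.
have : nth 0 (map vv t) c \in map vv t by apply: mem_nth; rewrite size_map size_tuple.
move=> /mapP [d _ ->]; apply: map_f; rewrite mem_enum; exact: (valP d).
Qed.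

Lemma next_elem b (D : {set 'I_b}) (k : nat -> nat) n y :
  (forall i j, i < j -> k i < k j) -> (forall x, inC D x <-> exists n, k n = x) ->
  k n < y -> inC D y -> (forall z, inC D z -> k n < z -> z < y -> False) ->
  k n.+1 = y.
Proof.
move=> hinc henum hy hyC hnone.
have mono : forall i j, i <= j -> k i <= k j.
  move=> i j; rewrite leq_eqVlt => /orP [/eqP -> // | /hinc /ltnW //].
have [p hp] := (henum y).1 hyC.
have hnp : n < p by rewrite ltnNge; apply/negP => /mono; rewrite hp leqNgt hy.
have h1 : k n.+1 <= y by rewrite -hp; apply: mono.
have h2 : k n < k n.+1 by apply: hinc.
move: h1; rewrite leq_eqVlt => /orP [/eqP // | hlt].
exfalso; apply: (hnone (k n.+1)) => //; apply/henum; by exists n.+1.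
Qed.

Lemma index_take_lt (s : seq nat) m x : x \in take m s -> index x s < m.
Proof.
elim: s m => [|y s IH] [|m] //=.
case: eqP => // hne; rewrite inE => /orP [/eqP hx | /IH //].
by exfalso; apply: hne; rewrite hx.
Qed.

Theorem mainTheorem2 (R : realType) (b : nat) (D : {set 'I_b}) (k : nat -> nat)
  (hb : 3 <= b) (hD : 2 <= #|D| < b.-1)
  (hk_incr : forall i j, i < j -> k i < k j)
  (hk_enum : forall x, inC D x <-> exists n, k n = x)
  (eps : R) (heps : (0 < eps)%R) (H : nat) :
  exists N : nat, forall n0 : nat, N <= n0 ->
    exists (G : seq nat) (k'' : nat -> nat -> nat),
      [/\ uniq G,
          (forall x, x \in G -> inC D x /\ x < b ^ n0),
          (forall k' h, k' \in G -> 0 < h <= H ->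
             inC D (k'' k' h) /\ k'' k' h < b ^ n0),
          ((1 - eps) * (#|D| ^ n0)%:R <= (size G)%:R)%R &
          (forall k' h m n, k' \in G -> 0 < h <= H -> 1 <= m ->
             k n = b ^ n0 * k m + k' ->
             k (n + h) = b ^ n0 * k m + k'' k' h /\
             sumdig b (k (n + h)) = sumdig b (k m) + sumdig b (k'' k' h))].
Proof.
have hb1 : 1 < b by apply: leq_trans hb.
have hb0 : 0 < b by apply: ltnW.
set B := Num.Def.archi_bound (H%:R / eps : R).
exists (maxn B H).+1 => n0 hn0.
set T := [seq x <- iota 0 (b ^ n0) | Pb D n0 x].
have hTs : sorted ltn T by apply: sorted_filter; [exact: ltn_trans | exact: iota_ltn_sorted].
have hTu : uniq T by rewrite filter_uniq ?iota_uniq.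
have hTm : forall x, x \in T -> Pb D n0 x /\ x < b ^ n0.
  by move=> x; rewrite mem_filter mem_iota add0n => /andP [].
have hM := count_Pb D n0 hb1; rewrite -/T in hM.
have hn0p : 0 < n0 by apply: leq_trans hn0.
have hnH : H < n0 by apply: leq_trans hn0; rewrite ltnS leq_maxr.
have hnB : B < n0 by apply: leq_trans hn0; rewrite ltnS leq_maxl.
have hM2 : n0 < #|D| ^ n0.
  apply: (leq_trans (ltn_expl n0 (isT : 1 < 2))); rewrite leq_exp2r //.
  by case/andP: hD.
exists (take (size T - H) T), (fun k' h => nth 0 T (index k' T + h)).
split.
- exact: take_uniq.
- move=> x /mem_take /hTm [hP hx]; split => //; exact: Pb_inC hP.
- move=> k' h hk' /andP [_ hh].
  have hi := index_take_lt hk'.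
  have hin : index k' T + h < size T by clear -hi hh; lia.
  have /hTm [hP hx] := mem_nth 0 hin; split => //; exact: Pb_inC hP.
- have hsz : size (take (size T - H) T) = size T - H by rewrite size_take_min; apply/minn_idPl; exact: leq_subr.
  rewrite hsz.
  have hBr : (H%:R / eps < (#|D| ^ n0)%:R :> R)%R.
    apply: (lt_le_trans (archi_boundP _)).
      by apply: divr_ge0; [exact: ler0n | exact: ltW].
    by rewrite ler_nat -/B; exact: ltnW (ltn_trans hnB hM2).
  rewrite ltr_pdivrMr // in hBr.
  have hle : ((#|D| ^ n0)%:R - H%:R <= (size T - H)%:R :> R)%R.
    rewrite -natrB ?ler_nat ?leq_sub2r //; exact: ltnW (ltn_trans hnH hM2).
  apply: le_trans hle; rewrite mulrBl mul1r lerD2l lerN2 mulrC; exact: ltW hBr.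
- move=> k' h m n hk' /andP [_ hh] hm hn.
  set A := b ^ n0 * k m.
  have hkm : 0 < k m by apply: (leq_ltn_trans (leq0n (k 0))); apply: hk_incr.
  have hkmC : inC D (k m) by apply/hk_enum; exists m.
  have hi := index_take_lt hk'.
  have hk'T : k' \in T by apply: mem_take hk'.
  set i := index k' T in hi *.
  have hTl : sorted leq T by apply: sub_sorted hTs => x y /ltnW.
  have claim : forall j, i + j < size T -> k (n + j) = A + nth 0 T (i + j).
    elim => [|j IH] hj; first by rewrite !addn0 nth_index.
    have hj' : i + j < size T by apply: leq_ltn_trans hj; rewrite leq_add2l.
    have IHj := IH hj'.
    rewrite addnS; apply: (next_elem hk_incr hk_enum); rewrite ?IHj.
    + rewrite ltn_add2l.
      by apply: (sorted_ltn_nth ltn_trans 0 hTs (i + j) (i + j.+1)) => //; rewrite addnS.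
    + have /hTm [hP _] := mem_nth 0 hj; exact: Pb_block hP hkmC.
    + move=> z hz hlo hhi.
      have hx1 := (hTm _ (mem_nth 0 hj)).2.
      have hhi' : z < A + b ^ n0 by apply: (ltn_trans hhi); rewrite ltn_add2l.
      have hlo' : A <= z by apply: leq_trans (ltnW hlo); exact: leq_addr.
      have [hP ez] := inC_block_inv hb1 hz hkm hlo' hhi'.
      move: hP ez; set x := z %% b ^ n0 => hP ez.
      have hxT : x \in T by rewrite mem_filter hP mem_iota add0n; case/andP: hP.
      move: hlo hhi; rewrite ez !ltn_add2l => hlo hhi.
      have hp : index x T < size T by rewrite index_mem.
      have ex := nth_index 0 hxT.
      case: (leqP (index x T) (i + j)) => hc.
      * have := sorted_leq_nth leq_trans leqnn 0 hTl (index x T) (i + j) hp hj' hc.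
        by rewrite ex leqNgt hlo.
      * have := sorted_leq_nth leq_trans leqnn 0 hTl (i + j.+1) (index x T) hj hp.
        have hc2 : i + j.+1 <= index x T by rewrite addnS.
        by rewrite ex => /(_ hc2); rewrite leqNgt hhi.
  have hih : i + h < size T by clear -hi hh; lia.
  have e1 := claim h hih.
  split; first by [].
  rewrite e1 sumdig_block //.
  exact: (hTm _ (mem_nth 0 hih)).2.
Qed.
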